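(* For every finite field $\mathbb{F}_q$, the eigenvalues of the adjacency matrix of the unit-graph on $\operatorname{Mat}_2(\mathbb{F}_q)$ are exactly: $q^4-q^3-q^2+q$ with multiplicity $1$, $q$ with multiplicity $q^4-q^3-q^2+q$, and $q-q^2$ with multiplicity $q^3+q^2-q-1$.
   Context: The unit-graph on $\operatorname{Mat}_2(\mathbb{F}_q)$ is the graph with vertex set $\operatorname{Mat}_2(\mathbb{F}_q)$ in which $A$ and $B$ are adjacent iff $B - A \in \operatorname{GL}_2(\mathbb{F}_q)$. *)

(* Defs.v *)
From HB Require Import structures.
From mathcomp Require Import all_boot all_order all_algebra all_field.
Set Implicit Arguments. Unset Strict Implicit. Unset Printing Implicit Defensive.
Import GRing.Theory Num.Theory.
Local Open Scope ring_scope.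

Definition vtx (F : finFieldType) (i : 'I_#|{: 'M[F]_2}|) : 'M[F]_2 := enum_val i.

Definition unit_adj (F : finFieldType) : 'M[algC]_#|{: 'M[F]_2}| :=
  \matrix_(i, j) ((vtx j - vtx i \in unitmx) : nat)%:R.

(* Main.v *)
Require Import Defs.
From HB Require Import structures.
From mathcomp Require Import all_boot all_order all_algebra all_field.
From mathcomp Require Import ring zify.
Set Implicit Arguments. Unset Strict Implicit. Unset Printing Implicit Defensive.
Import GRing.Theory Num.Theory.
Local Open Scope ring_scope.

Lemma prodc (R : comNzRingType) k (P : pred 'I_k) (c : R) : \prod_(i | P i) c = c ^+ #|P|.
Proof. by rewrite prodr_const. Qed.
Lemma sumc (R : nmodType) k (P : pred 'I_k) (c : R) : \sum_(i | P i) c = c *+ #|P|.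
Proof. by rewrite sumr_const. Qed.

Lemma big_part3 (R : Type) (idx : R) (op : Monoid.com_law idx) k (t : 'I_k -> algC)
   (d x r : algC) (G : algC -> R) :
  d != x -> d != r -> x != r -> (forall i, [\/ t i = d, t i = x | t i = r]) ->
  \big[op/idx]_i G (t i) = op (op (\big[op/idx]_(i | t i == d) G d)
      (\big[op/idx]_(i | t i == x) G x)) (\big[op/idx]_(i | t i == r) G r).
Proof.
move=> dx dr xr ht.
rewrite (bigID (fun i => t i == d)) /= [X in op _ X](bigID (fun i => t i == x)) /=.
rewrite Monoid.mulmA; congr (op (op _ _) _).
- by apply: eq_bigr => i /eqP->.
- apply: eq_big => [i|i /andP[_ /eqP->]] //.
  by case: (eqVneq (t i) x) => [->|]; rewrite ?andbT ?andbF // eq_sym.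
- have e1 := negPf dr; have e2 := negPf xr.
  have e3 : (r == d) = false by rewrite eq_sym.
  have e4 : (r == x) = false by rewrite eq_sym.
  apply: eq_big => [i|i].
  + by case: (ht i) => ->; rewrite !eqxx ?e1 ?e2 ?e3 ?e4 //= ?andbF.
  + by move=> /andP[ne1 ne2]; case: (ht i) ne1 ne2 => ->; rewrite ?eqxx.
Qed.

Lemma char_poly_conj (F : fieldType) n (V A : 'M[F]_n) : V \in unitmx ->
  char_poly (V *m A *m invmx V) = char_poly A.
Proof.
move=> Vu; rewrite /char_poly /char_poly_mx !map_mxM map_invmx.
set V' := map_mx _ V; set A' := map_mx _ A.
have V'u : V' \in unitmx by rewrite map_unitmx.
have eX : ('X%:M : 'M_n) = V' *m 'X%:M *m invmx V'.
  by rewrite scalar_mxC -mulmxA mulmxV // mulmx1.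
rewrite {1}eX -mulmxBl -mulmxBr !det_mulmx det_inv mulrC mulrA mulVr ?mul1r //.
Qed.

Lemma trig_sq_diag (R : comNzRingType) n (T : 'M[R]_n) i : is_trig_mx T ->
  (T *m T) i i = T i i ^+ 2.
Proof.
move=> /is_trig_mxP Tt; rewrite mxE (bigD1 i) //= big1 ?addr0 //.
move=> k nki; case: (ltngtP i k) => h.
- by rewrite Tt // mul0r.
- by rewrite (Tt k i) // mulr0.
- by move: nki; rewrite (val_inj h) eqxx.
Qed.

Definition ddv (x : algC) := x^+4 - x^+3 - x^+2 + x.
Definition rv (x : algC) := x - x^+2.

Lemma solve3 (x a b c : algC) : x != 0 -> x - 1 != 0 -> x^+2 - x - 1 != 0 ->
  a + b + c = x^+4 ->
  a * ddv x + b * x + c * rv x = 0 ->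
  a * ddv x ^+ 2 + b * x^+2 + c * rv x ^+ 2 = x^+4 * ddv x ->
  [/\ a = 1, b = ddv x & c = x^+4 - 1 - ddv x].
Proof.
move=> x0 x1 x2 E1 E2 E3.
have ka : a * ((ddv x - x) * (ddv x - rv x)) = 1 * ((ddv x - x) * (ddv x - rv x)).
  have -> : a * ((ddv x - x) * (ddv x - rv x)) =
     (a * ddv x ^+ 2 + b * x^+2 + c * rv x ^+ 2) - (x + rv x) * (a * ddv x + b * x + c * rv x)
     + x * rv x * (a + b + c) by rewrite /rv; ring.
  rewrite E1 E2 E3 /ddv /rv; ring.
have kb : b * ((x - ddv x) * (x - rv x)) = ddv x * ((x - ddv x) * (x - rv x)).
  have -> : b * ((x - ddv x) * (x - rv x)) =
     (a * ddv x ^+ 2 + b * x^+2 + c * rv x ^+ 2) - (ddv x + rv x) * (a * ddv x + b * x + c * rv x)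
     + ddv x * rv x * (a + b + c) by rewrite /rv; ring.
  rewrite E1 E2 E3 /ddv /rv; ring.
have nz1 : (ddv x - x) * (ddv x - rv x) != 0.
  have -> : (ddv x - x) * (ddv x - rv x) = x ^+ 5 * (x^+2 - x - 1) * (x - 1)
    by rewrite /ddv /rv; ring.
  by rewrite !mulf_neq0 // expf_neq0.
have nz2 : (x - ddv x) * (x - rv x) != 0.
  have -> : (x - ddv x) * (x - rv x) = - (x ^+ 4 * (x^+2 - x - 1))
    by rewrite /ddv /rv; ring.
  by rewrite oppr_eq0 !mulf_neq0 // expf_neq0.
have ea := mulIf nz1 ka; have eb := mulIf nz2 kb.
split => //; move: E1; rewrite ea eb => <-; ring.
Qed.

Lemma spec (m : nat) (x : algC) (B J : 'M[algC]_m) :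
  (0 < m)%N -> x != 0 -> x - 1 != 0 -> x^+2 - x - 1 != 0 ->
  m%:R = x ^+ 4 ->
  B *m B = (x^+3 - x^+2)%:M + (2 * x - x^+2) *: B + (x^+4 - 2 * x^+3 + x) *: J ->
  B *m J = ddv x *: J ->
  \tr B = 0 -> \tr J = m%:R ->
  exists a b c : nat, [/\ char_poly B =
     ('X - (ddv x)%:P) ^+ a * ('X - x%:P) ^+ b * ('X - (rv x)%:P) ^+ c,
     (a%:R : algC) = 1, (b%:R : algC) = ddv x & (c%:R : algC) = x^+4 - 1 - ddv x].
Proof.
case: m B J => // m B J _ x0 x1 x2 mx H1 H2 trB trJ.
have [P Pu Ptrig] := Schur B isT.
have Punit := unitarymx_unit Pu.
move: Ptrig; rewrite /similar_to conjumx // => Ttrig.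
set T := P *m B *m invmx P in Ttrig.
have hB : B = invmx P *m T *m P.
  by rewrite /T !mulmxA mulVmx // mul1mx -mulmxA mulVmx // mulmx1.
have cBT : char_poly B = char_poly T by rewrite /T char_poly_conj.
clearbody T.
have ct := char_poly_trig Ttrig.
pose p : {poly algC} := ('X - (ddv x)%:P) * ('X - x%:P) * ('X - (rv x)%:P).
have pB : horner_mx B p = 0.
  rewrite /p !rmorphM !rmorphB /= horner_mx_X !horner_mx_C -mulrA.
  have -> : (B - x%:M) * (B - (x%:M - (x^+2)%:M)) = (x^+4 - 2 * x^+3 + x) *: J.
    rewrite mulrBl !mulrBr -!mulmxE H1 !mul_scalar_mx !mul_mx_scalar.
    apply/matrixP => i j; rewrite !mxE /rv.
    case: (i == j); rewrite /= ?mulr1n ?mulr0n; ring.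
  by rewrite -scalerAr mulrBl -mulmxE H2 mul_scalar_mx subrr scaler0.
have roots i : [\/ T i i = ddv x, T i i = x | T i i = rv x].
  have : root (char_poly B) (T i i).
    by rewrite cBT ct (bigD1 i) //= rootM root_XsubC eqxx.
  rewrite -root_mxminpoly => /(root_dvdp (mxminpoly_min pB)).
  rewrite /p !rootM !root_XsubC => /orP[/orP[]|] /eqP ->; by constructor.
have nz1 : ddv x != x.
  rewrite -subr_eq0; have -> : ddv x - x = x ^+ 2 * (x^+2 - x - 1) by rewrite /ddv; ring.
  by rewrite mulf_neq0 // expf_neq0.
have nz2 : ddv x != rv x.
  rewrite -subr_eq0; have -> : ddv x - rv x = x ^+ 3 * (x - 1) by rewrite /ddv /rv; ring.
  by rewrite mulf_neq0 // expf_neq0.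
have nz3 : x != rv x.
  rewrite -subr_eq0; have -> : x - rv x = x ^+ 2 by rewrite /rv; ring.
  by rewrite expf_neq0.
have part := big_part3 _ _ nz1 nz2 nz3 roots.
set a := #|[pred i | T i i == ddv x]|.
set b := #|[pred i | T i i == x]|.
set c := #|[pred i | T i i == rv x]|.
have trT : \tr B = \tr T.
  by rewrite hB mxtrace_mulC mulmxA mulmxV // mul1mx.
have trT2 : \tr (B *m B) = \tr (T *m T).
  by rewrite hB !mulmxA mulmxK // mxtrace_mulC !mulmxA mulmxV // mul1mx.
have E1 : a%:R + b%:R + c%:R = x ^+ 4 :> algC.
  have : \sum_(i < m.+1) (1 : algC) = x ^+ 4 by rewrite sumr_const card_ord.
  by rewrite (part _ _ _ (fun _ => 1)) /= !sumc.
have E2 : a%:R * ddv x + b%:R * x + c%:R * rv x = 0 :> algC.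
  move: trB; rewrite trT /mxtrace (part _ _ _ id) /= !sumc.
  by rewrite !mulr_natl.
have E3 : a%:R * ddv x ^+ 2 + b%:R * x ^+ 2 + c%:R * rv x ^+ 2 = x ^+ 4 * ddv x :> algC.
  have : \tr (B *m B) = x ^+ 4 * ddv x.
    rewrite H1 !mxtraceD !mxtraceZ mxtrace_scalar trB trJ mx /ddv.
    have -> : (x ^+ 3 - x ^+ 2) *+ m.+1 = (x^+3 - x^+2) * x^+4 by rewrite -mx mulr_natr.
    ring.
  rewrite trT2 /mxtrace.
  under eq_bigr do rewrite trig_sq_diag //.
  by rewrite (part _ _ _ (fun v => v ^+ 2)) /= !sumc !mulr_natl.
have [ea eb ec] := solve3 x0 x1 x2 E1 E2 E3.
exists a, b, c; split => //.
rewrite cBT ct (part _ _ _ (fun v => 'X - v%:P)) /= !prodc //.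
Qed.

Lemma ord2P (i : 'I_2) : i = 0 \/ i = 1.
Proof. by case: i => [[|[|//]] Hi]; [left|right]; apply/val_inj. Qed.

Lemma det2 (R : comNzRingType) (A : 'M[R]_2) : \det A = A 0 0 * A 1 1 - A 0 1 * A 1 0.
Proof.
rewrite (expand_det_row _ 0) !big_ord_recl big_ord0 /cofactor !det_mx11 /=.
rewrite !mxE /= expr0 expr1 mul1r mulN1r addr0 mulrN.
have -> : lift (0 : 'I_2) 0 = 1 by apply/val_inj.
by have -> : lift (1 : 'I_2) 0 = 0 by apply/val_inj.
Qed.

Section Comb.
Variable F : finFieldType.

Definition mk4 (p : F * (F * (F * F))) : 'M[F]_2 :=
  \matrix_(i < 2, j < 2) (if i == 0 then (if j == 0 then p.1 else p.2.1)
                          else (if j == 0 then p.2.2.1 else p.2.2.2)).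
Definition un4 (Y : 'M[F]_2) : F * (F * (F * F)) := (Y 0 0, (Y 0 1, (Y 1 0, Y 1 1))).

Lemma mk4K : cancel mk4 un4.
Proof. by case=> a [b [c e]]; rewrite /un4 /mk4 !mxE. Qed.
Lemma un4K : cancel un4 mk4.
Proof.
move=> Y; apply/matrixP => i j; rewrite mxE.
by case: (ord2P i) => ->; case: (ord2P j) => ->.
Qed.

Lemma sum_mx2 (h : 'M[F]_2 -> nat) :
  (\sum_Y h Y = \sum_a \sum_b \sum_c \sum_e h (mk4 (a, (b, (c, e)))))%N.
Proof.
rewrite (reindex mk4); last by exists un4 => ? _; rewrite ?mk4K ?un4K.
symmetry.
under eq_bigr do under eq_bigr do rewrite pair_big.
under eq_bigr do rewrite pair_big.
by rewrite pair_big; apply: eq_big => [[a [b [c e]]]|[a [b [c e]]] _].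
Qed.

Lemma sum_pred (T : finType) (P : pred T) : (\sum_(Y : T) (P Y : nat))%N = #|P|.
Proof.
rewrite -sum1_card [RHS]big_mkcond /=; apply: eq_bigr => i _.
by rewrite -[i \in P]/(P i); case: (P i).
Qed.

Lemma sum_eq1 (T : finType) (y : T) : (\sum_(c : T) ((c == y) : nat))%N = 1%N.
Proof. by rewrite (bigD1 y) //= eqxx big1 // => c /negbTE ->. Qed.

Lemma Nk (k : F) : (\sum_b \sum_c (((b * c)%R == k) : nat))%N = ((k == 0%R) * #|F| + #|F|.-1)%N.
Proof.
rewrite (bigD1 (0%R:F)) //=.
have -> : (\sum_c (((0 * c)%R == k) : nat))%N = ((k == 0%R) * #|F|)%N.
  rewrite (eq_bigr (fun c => (k == 0%R : nat))); last by move=> c _; rewrite mul0r eq_sym.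
  by rewrite sum_nat_const mulnC.
congr (_ + _)%N.
rewrite -(cardC1 (0 : F)) -sum1_card; apply: eq_bigr => b nb.
rewrite -(sum_eq1 (b^-1 * k)); apply: eq_bigr => c _.
congr (nat_of_bool _); apply/eqP/eqP => [<-|->]; first by rewrite mulKf.
by rewrite mulVKf.
Qed.


Lemma sum_eqand (T : finType) (y : T) (X : bool) : (\sum_(c : T) (((c == y) && X) : nat))%N = X.
Proof.
case: X; first by under eq_bigr do rewrite andbT; rewrite sum_eq1.
by rewrite big1 // => c; rewrite andbF.
Qed.

Lemma unitN (Y : 'M[F]_2) : (- Y \in unitmx) = (Y \in unitmx).
Proof. by rewrite -[- Y]scaleN1r unitmxZ ?unitrN1. Qed.

Definition fc (D : 'M[F]_2) := (\sum_Y (((Y \in unitmx) && ((D - Y)%R \in unitmx)) : nat))%N.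
Definition gc (D : 'M[F]_2) := (\sum_Y ((~~(Y \in unitmx) && ~~((D - Y)%R \in unitmx)) : nat))%N.
Definition NU := (\sum_(Y : 'M[F]_2) ((Y \in unitmx) : nat))%N.
Definition SU := (\sum_(Y : 'M[F]_2) (~~(Y \in unitmx) : nat))%N.

Lemma NUE : NU = (#|F| * #|F|.-1 ^ 2 * #|F|.+1)%N.
Proof. by rewrite /NU sum_pred -card_GL_2 cardsT /= card_sub; apply: eq_card. Qed.

Lemma NUSU : (NU + SU)%N = (#|F| ^ 4)%N.
Proof.
rewrite /NU /SU -big_split /=.
rewrite (eq_bigr (fun _ => 1%N)); last by move=> Y _; case: (_ \in _).
by rewrite sum_nat_const muln1 card_mx.
Qed.

Lemma fc0 : fc 0 = NU.
Proof. by apply: eq_bigr => Y _; rewrite sub0r unitN andbb. Qed.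

Lemma fc_ie D : (fc D + SU * 2)%N = (#|F| ^ 4 + gc D)%N.
Proof.
have SU' : SU = (\sum_(Y : 'M[F]_2) (~~((D - Y)%R \in unitmx) : nat))%N.
  by rewrite /SU (reindex_inj (inv_inj (subKr D))).
rewrite muln2 -addnn {2}SU' /fc /SU -!big_split /=.
rewrite (eq_bigr (fun i => 1 + ((i \notin unitmx) && ((D - i)%R \notin unitmx)))%N); last first.
  by move=> Y _; case: (_ \in unitmx); case: (_ \in unitmx).
by rewrite big_split /= sum_nat_const muln1 card_mx.
Qed.


Lemma fc_conj (P Q D : 'M[F]_2) : P \in unitmx -> Q \in unitmx -> fc (P *m D *m Q) = fc D.
Proof.
move=> Pu Qu.
have hinj : injective (fun Y : 'M[F]_2 => P *m Y *m Q).
  apply: (can_inj (g := fun Y => invmx P *m Y *m invmx Q)) => Y.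
  by rewrite !mulmxA mulmxK // mulVmx // mul1mx.
rewrite /fc (reindex_inj hinj) /=; apply: eq_bigr => Y _.
by rewrite -mulmxBl -mulmxBr !unitmx_mul Pu Qu /= !andbT.
Qed.

Lemma fc_rank D : fc D = fc (pid_mx (\rank D)).
Proof. by rewrite -{1}(mulmx_ebase D) fc_conj ?col_ebase_unit ?row_ebase_unit. Qed.

Lemma fcU D : D \in unitmx -> fc D = fc 1.
Proof. by move=> Du; rewrite fc_rank mxrank_unit // pid_mx_1. Qed.

Lemma fcS D : D != 0 -> D \notin unitmx -> fc D = fc (pid_mx 1).
Proof.
move=> D0 Du; rewrite fc_rank; congr (fc (pid_mx _)).
have r2 := rank_leq_row D.
have r0 : \rank D != 0%N by rewrite mxrank_eq0.
have r1 : \rank D != 2%N by rewrite -row_free_unit /row_free in Du.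
by move: r2 r0 r1; case: (\rank D) => [|[|[|]]].
Qed.

Lemma gc1 : gc 1 = (#|F| * 2 + #|F| * #|F|.-1)%N.
Proof.
rewrite /gc sum_mx2.
have key a b c e : (~~ (mk4 (a, (b, (c, e))) \in unitmx) && ~~ ((1 - mk4 (a, (b, (c, e))))%R \in unitmx))
   = (e == 1 - a) && (b * c == a * (1 - a)).
  rewrite !unitmxE !unitfE !negbK !det2 !mxE /=.
  have -> : (0 - b) * (0 - c) = b * c by ring.
  apply/andP/andP => [[/eqP h1 /eqP h2]|[/eqP he /eqP hb]].
    have he : e = 1 - a.
      apply/eqP; rewrite -subr_eq0.
      have -> : e - (1 - a) = (a * e - b * c) - ((1 - a) * (1 - e) - b * c) by ring.
      by rewrite h1 h2 subrr.
    split; apply/eqP => //.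
    rewrite he in h1.
    have -> : b * c = a * (1 - a) - (a * (1 - a) - b * c) by ring.
    by rewrite h1 subr0.
  by split; apply/eqP; rewrite he hb; ring.
under eq_bigr do under eq_bigr do under eq_bigr do under eq_bigr do rewrite key.
under eq_bigr do under eq_bigr do under eq_bigr do rewrite sum_eqand.
under eq_bigr do rewrite Nk.
rewrite big_split /= sum_nat_const -big_distrl /= sum_pred mulnC.
congr (_ * _ + _)%N.
rewrite (eq_card (B := pred2 (0 : F) 1)) ?card2 ?(eq_sym 0) ?oner_eq0 // => i.
by rewrite -[i \in pred2 _ _]/(pred2 0 1 i) -[i \in (fun _ => _)]/(i * (1 - i) == 0) /= mulf_eq0 subr_eq0 (eq_sym 1).
Qed.

Lemma gcE : gc (pid_mx 1) = (#|F| * (#|F| + #|F|.-1))%N.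
Proof.
rewrite /gc sum_mx2.
have key a b c e : (~~ (mk4 (a, (b, (c, e))) \in unitmx) && ~~ ((pid_mx 1 - mk4 (a, (b, (c, e))))%R \in unitmx))
   = (e == 0) && (b * c == 0).
  rewrite !unitmxE !unitfE !negbK !det2 !mxE /=.
  have -> : (0 - b) * (0 - c) = b * c by ring.
  apply/andP/andP => [[/eqP h1 /eqP h2]|[/eqP he /eqP hb]].
    have he : e = 0.
      have -> : e = -((1 - a) * (0 - e) - b * c) + (a * e - b * c) by ring.
      by rewrite h1 h2 oppr0 addr0.
    split; apply/eqP => //.
    by move: h1; rewrite he mulr0 sub0r => /eqP; rewrite oppr_eq0 => /eqP.
  by split; apply/eqP; rewrite he hb; ring.
under eq_bigr do under eq_bigr do under eq_bigr do under eq_bigr do rewrite key.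
under eq_bigr do under eq_bigr do under eq_bigr do rewrite sum_eqand.
under eq_bigr do rewrite Nk eqxx.
by rewrite sum_nat_const mul1n.
Qed.

End Comb.

Section Main.
Variable F : finFieldType.
Local Notation n := #|{: 'M[F]_2}|.

Lemma sumV (G : 'M[F]_2 -> nat) : (\sum_(k < n) G (vtx k))%N = (\sum_Y G Y)%N.
Proof.
rewrite (reindex (@enum_rank _)); last by exists enum_val => ? _; rewrite ?enum_rankK ?enum_valK.
by apply: eq_bigr => Y _; rewrite /vtx enum_rankK.
Qed.

Lemma BBij i j : (unit_adj F *m unit_adj F) i j = (fc (vtx j - vtx i))%:R.
Proof.
rewrite !mxE; under eq_bigr do rewrite !mxE -natrM mulnb.
rewrite -natr_sum (sumV (fun Y => ((Y - vtx i \in unitmx) && (vtx j - Y \in unitmx)) : nat)).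
congr (_%:R).
rewrite (reindex_inj (addIr (vtx i))) /=; apply: eq_bigr => Z _.
by rewrite addrK opprD addrA addrAC.
Qed.

Lemma BJij i j : (unit_adj F *m (const_mx 1 : 'M[algC]_n)) i j = (NU F)%:R.
Proof.
rewrite !mxE; under eq_bigr do rewrite !mxE mulr1.
rewrite -natr_sum (sumV (fun Y => (Y - vtx i \in unitmx) : nat)).
congr (_%:R).
rewrite (reindex_inj (addIr (vtx i))) /=; apply: eq_bigr => Z _.
by rewrite addrK.
Qed.

Lemma unitmx0F : ((0 : 'M[F]_2) \in unitmx) = false.
Proof. by rewrite unitmxE det0 unitr0. Qed.

End Main.

Theorem corollary3p7 (F : finFieldType) :
  char_poly (unit_adj F) =
    ('X - ((#|F| ^ 4)%:R - (#|F| ^ 3)%:R - (#|F| ^ 2)%:R + #|F|%:R : algC)%:P)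
    * ('X - (#|F|%:R : algC)%:P) ^+ (#|F| ^ 4 - #|F| ^ 3 - #|F| ^ 2 + #|F|)%N
    * ('X - (#|F|%:R - (#|F| ^ 2)%:R : algC)%:P) ^+ (#|F| ^ 3 + #|F| ^ 2 - #|F| - 1)%N.
Proof.
set q := #|F|.
have q2 : (1 < q)%N.
  have := max_card (pred2 (0 : F) 1); rewrite card2 eq_sym oner_eq0 //.
set x : algC := q%:R.
have qm1 : (q.-1)%:R = x - 1 :> algC by rewrite -subn1 natrB // ltnW.
have x0 : x != 0 by rewrite pnatr_eq0; lia.
have x1 : x - 1 != 0 by rewrite -qm1 pnatr_eq0; lia.
have x2 : x ^+ 2 - x - 1 != 0.
  have -> : x ^+ 2 - x - 1 = (q ^ 2 - (q + 1))%N%:R.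
    rewrite natrB ?natrD ?natrX ?opprD ?addrA //.
    have : (2 * q <= q ^ 2)%N by nia.
    lia.
  rewrite pnatr_eq0.
  have : (q + 1 < q ^ 2)%N.
    nia.
  lia.
have nx : (#|{: 'M[F]_2}|)%:R = x ^+ 4 :> algC by rewrite card_mx natrX.
have NUx : (NU F)%:R = ddv x.
  by rewrite NUE !natrM ?natrX qm1 -natr1 /ddv; ring.
have SUx : (SU F)%:R = x ^+ 4 - ddv x.
  have h := congr1 (fun k => k%:R : algC) (NUSU F).
  rewrite /= natrD natrX NUx in h.
  by rewrite -h; ring.
have f1x : (fc (1 : 'M[F]_2))%:R = x^+4 - 2 * x^+3 - x^+2 + 3 * x.
  have h := congr1 (fun k => k%:R : algC) (fc_ie (1 : 'M[F]_2)).
  rewrite /= gc1 !(natrD, natrM, natrX) SUx qm1 in h.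
  have -> : (fc (1 : 'M[F]_2))%:R = ((fc (1 : 'M[F]_2))%:R + (x ^+ 4 - ddv x) * 2%:R) - (x ^+ 4 - ddv x) * 2%:R.
    by rewrite addrK.
  by rewrite h /ddv; ring.
have fEx : (fc (pid_mx 1 : 'M[F]_2))%:R = x^+4 - 2 * x^+3 + x.
  have h := congr1 (fun k => k%:R : algC) (fc_ie (pid_mx 1 : 'M[F]_2)).
  rewrite /= gcE !(natrD, natrM, natrX) SUx qm1 in h.
  have -> : (fc (pid_mx 1 : 'M[F]_2))%:R = ((fc (pid_mx 1 : 'M[F]_2))%:R + (x ^+ 4 - ddv x) * 2%:R) - (x ^+ 4 - ddv x) * 2%:R.
    by rewrite addrK.
  by rewrite h /ddv; ring.
set B := unit_adj F.
set J := (const_mx 1 : 'M[algC]_#|{: 'M[F]_2}|).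
have H1 : B *m B = (x^+3 - x^+2)%:M + (2 * x - x^+2) *: B + (x^+4 - 2 * x^+3 + x) *: J.
  apply/matrixP => i j; rewrite BBij /B /J /unit_adj !mxE.
  case: (eqVneq i j) => [<-|nij].
    rewrite subrr fc0 NUx unitmx0F /= /ddv; ring.
  have D0 : vtx j - vtx i != 0.
    rewrite subr_eq0; apply/eqP => /enum_val_inj eji.
    by move: nij; rewrite eji eqxx.
  rewrite mulr0n add0r.
  case: (boolP (vtx j - vtx i \in unitmx)) => hu.
    by rewrite fcU // f1x /=; ring.
  by rewrite fcS // fEx /=; ring.
have H2 : B *m J = ddv x *: J.
  by apply/matrixP => i j; rewrite BJij /J !mxE NUx mulr1.
have trB : \tr B = 0.
  by rewrite /mxtrace big1 // => i _; rewrite /B /unit_adj mxE subrr unitmx0F.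
have trJ : \tr J = (#|{: 'M[F]_2}|)%:R.
  by rewrite /mxtrace (eq_bigr (fun _ => 1)) ?sumr_const ?card_ord // => i _; rewrite mxE.
have n0 : (0 < #|{: 'M[F]_2}|)%N by rewrite card_mx expn_gt0 ltnW.
have [a [b [c [cp ea eb ec]]]] := spec n0 x0 x1 x2 nx H1 H2 trB trJ.
rewrite cp.
have h43 : (q ^ 3 <= q ^ 4)%N by nia.
have h2 : (q ^ 2 <= q ^ 4 - q ^ 3)%N by nia.
have h1 : (q <= q ^ 3 + q ^ 2)%N by nia.
have h0 : (1 <= q ^ 3 + q ^ 2 - q)%N by nia.
have -> : a = 1%N by apply/eqP; rewrite -(eqr_nat algC) ea.
have -> : b = (q ^ 4 - q ^ 3 - q ^ 2 + q)%N.
  by apply/eqP; rewrite -(eqr_nat algC) eb natrD !natrB // !natrX /ddv.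
have -> : c = (q ^ 3 + q ^ 2 - q - 1)%N.
  apply/eqP; rewrite -(eqr_nat algC) ec !natrB // natrD !natrX /ddv; apply/eqP; ring.
by rewrite expr1 !natrX /ddv /rv.
Qed.
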